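(* Let $\mathbb{C}$ be a normal category with pushouts of regular epimorphisms. Let $K\to U$ and $L\to V$ be kernels (normal monomorphisms) and $U\to A$, $V\to A$ monomorphisms, and let $U\cap V$ be their intersection. Write $K\cap V$ and $L\cap U$ for the intersections $K\cap(U\cap V)$ and $L\cap(U\cap V)$, which are kernels on $U\cap V$, and $J:=(K\cap V)\vee_{U\cap V}(L\cap U)$. Then $$\frac{K\,\underline{\vee}_U\,(U\cap V)}{K\,\underline{\vee}_U\,J}\;\cong\;\frac{U\cap V}{J}\;\cong\;\frac{L\,\underline{\vee}_V\,(U\cap V)}{L\,\underline{\vee}_V\,J},$$ where in particular $K\,\underline{\vee}_U\,J$ is a normal subobject of $K\,\underline{\vee}_U\,(U\cap V)$ and $L\,\underline{\vee}_V\,J$ a normal subobject of $L\,\underline{\vee}_V\,(U\cap V)$.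
   Context: A normal category is a pointed regular category in which every regular epimorphism is a normal epimorphism (a cokernel). For a kernel $K\to U$ with cokernel $p\colon U\to U/K$ and a subobject $X\to U$, the asymmetric join is $K\,\underline{\vee}_U\,X:=p^{-1}(p(X))$, the pullback along $p$ of the regular image of $X$; it is a subobject of $U$. For two kernels $K_1,K_2$ on the same object $B$ with cokernels $p_1,p_2$, $K_1\vee_B K_2$ is the kernel of the diagonal $q$ of the pushout of $p_1$ and $p_2$. $X/N$ denotes the cokernel of a kernel $N\to X$. Subobjects of $U\cap V$ are regarded as subobjects of $U$ and of $V$ via the inclusions. *)

(* Defs.v *)
From Stdlib Require Import Setoid.

Set Implicit Arguments.
Unset Strict Implicit.

Record Category := {
  Ob :> Type;
  Hom : Ob -> Ob -> Type;
  idm : forall A, Hom A A;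
  comp : forall A B D, Hom B D -> Hom A B -> Hom A D;
  comp_id_l : forall A B (f : Hom A B), comp (idm B) f = f;
  comp_id_r : forall A B (f : Hom A B), comp f (idm A) = f;
  comp_assoc : forall A B D E (h : Hom D E) (g : Hom B D) (f : Hom A B),
      comp h (comp g f) = comp (comp h g) f
}.

Arguments Hom {c} _ _.
Arguments idm {c} _.
Arguments comp {c A B D} _ _.

Notation "g ∘ f" := (comp g f) (at level 40, left associativity).

Section Basic.
Variable C : Category.

Definition Mono {A B : C} (f : Hom A B) : Prop :=
  forall X (g h : Hom X A), f ∘ g = f ∘ h -> g = h.

Definition Isomorphic (A B : C) : Prop :=
  exists (f : Hom A B) (g : Hom B A), g ∘ f = idm A /\ f ∘ g = idm B.

Definition IsTerminal (T : C) : Prop :=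
  forall A : C, exists f : Hom A T, forall g : Hom A T, g = f.

Definition IsPullback {A B D P : C} (f : Hom A D) (g : Hom B D)
    (p1 : Hom P A) (p2 : Hom P B) : Prop :=
  f ∘ p1 = g ∘ p2 /\
  forall Q (q1 : Hom Q A) (q2 : Hom Q B), f ∘ q1 = g ∘ q2 ->
    exists u : Hom Q P, p1 ∘ u = q1 /\ p2 ∘ u = q2 /\
      forall v : Hom Q P, p1 ∘ v = q1 -> p2 ∘ v = q2 -> v = u.

Definition IsPushout {A B1 B2 P : C} (f1 : Hom A B1) (f2 : Hom A B2)
    (i1 : Hom B1 P) (i2 : Hom B2 P) : Prop :=
  i1 ∘ f1 = i2 ∘ f2 /\
  forall Q (q1 : Hom B1 Q) (q2 : Hom B2 Q), q1 ∘ f1 = q2 ∘ f2 ->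
    exists u : Hom P Q, u ∘ i1 = q1 /\ u ∘ i2 = q2 /\
      forall v : Hom P Q, v ∘ i1 = q1 -> v ∘ i2 = q2 -> v = u.

Definition IsCoequalizer {A B Q : C} (f g : Hom A B) (e : Hom B Q) : Prop :=
  e ∘ f = e ∘ g /\
  forall X (h : Hom B X), h ∘ f = h ∘ g ->
    exists u : Hom Q X, u ∘ e = h /\ forall v : Hom Q X, v ∘ e = h -> v = u.

Definition RegularEpi {B Q : C} (e : Hom B Q) : Prop :=
  exists (A : C) (f g : Hom A B), IsCoequalizer f g e.

Definition RegularCat : Prop :=
  (exists T : C, IsTerminal T) /\
  (forall A B D (f : Hom A D) (g : Hom B D),
      exists P (p1 : Hom P A) (p2 : Hom P B), IsPullback f g p1 p2) /\
  (forall A B (f : Hom A B),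
      exists I (e : Hom A I) (m : Hom I B), RegularEpi e /\ Mono m /\ m ∘ e = f) /\
  (forall A B D P (f : Hom A D) (g : Hom B D) (p1 : Hom P A) (p2 : Hom P B),
      IsPullback f g p1 p2 -> RegularEpi f -> RegularEpi p2).

End Basic.

Record PointedCat := {
  pcat :> Category;
  zero_ob : pcat;
  to_zero : forall A : pcat, Hom A zero_ob;
  from_zero : forall A : pcat, Hom zero_ob A;
  to_zero_unique : forall A (f : Hom A zero_ob), f = to_zero A;
  from_zero_unique : forall A (f : Hom zero_ob A), f = from_zero A
}.

Section Pointed.
Variable C : PointedCat.

Definition zmor (A B : C) : Hom A B := @from_zero C B ∘ @to_zero C A.

Definition IsKernel {A B K : C} (f : Hom A B) (k : Hom K A) : Prop :=
  f ∘ k = zmor K B /\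
  forall X (h : Hom X A), f ∘ h = zmor X B ->
    exists u : Hom X K, k ∘ u = h /\ forall v : Hom X K, k ∘ v = h -> v = u.

Definition IsCokernel {A B Q : C} (f : Hom A B) (q : Hom B Q) : Prop :=
  q ∘ f = zmor A Q /\
  forall X (h : Hom B X), h ∘ f = zmor A X ->
    exists u : Hom Q X, u ∘ q = h /\ forall v : Hom Q X, v ∘ q = h -> v = u.

Definition NormalMono {K A : C} (k : Hom K A) : Prop :=
  exists (B : C) (f : Hom A B), IsKernel f k.

Definition NormalEpi {B Q : C} (e : Hom B Q) : Prop :=
  exists (A : C) (f : Hom A B), IsCokernel f e.

Definition NormalCat : Prop :=
  RegularCat C /\ forall (B Q : C) (e : Hom B Q), RegularEpi e -> NormalEpi e.

Definition HasPushoutsOfRegEpis : Prop :=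
  forall (A B1 B2 : C) (e1 : Hom A B1) (e2 : Hom A B2), RegularEpi e1 -> RegularEpi e2 ->
    exists P (i1 : Hom B1 P) (i2 : Hom B2 P), IsPushout e1 e2 i1 i2.

(** [j : Jo -> U] represents the asymmetric join [K ⊻_U X = p^{-1}(p(X))] of the
    kernel [k : K -> U] and the subobject [x : X -> U], where [p] is a cokernel
    of [k], [p ∘ x = m ∘ e] is the (regular epi, mono) factorisation giving the
    regular image of [X], and [j] is the pullback of [m] along [p]. *)
Definition IsAsymJoin {K X U Jo : C} (k : Hom K U) (x : Hom X U) (j : Hom Jo U) : Prop :=
  exists (Q I : C) (p : Hom U Q) (e : Hom X I) (m : Hom I Q) (j' : Hom Jo I),
    IsCokernel k p /\ RegularEpi e /\ Mono m /\ m ∘ e = p ∘ x /\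
    IsPullback m p j' j.

(** [j : Jo -> B] represents the join [K1 ∨_B K2] of kernels [k1], [k2] on [B]:
    the kernel of the diagonal of the pushout of their cokernels. *)
Definition IsKernelJoin {K1 K2 B Jo : C} (k1 : Hom K1 B) (k2 : Hom K2 B) (j : Hom Jo B) : Prop :=
  exists (Q1 Q2 P : C) (p1 : Hom B Q1) (p2 : Hom B Q2) (i1 : Hom Q1 P) (i2 : Hom Q2 P),
    IsCokernel k1 p1 /\ IsCokernel k2 p2 /\ IsPushout p1 p2 i1 i2 /\
    IsKernel (i1 ∘ p1) j.

End Pointed.

(* Main.v *)
Require Import Defs.
Set Implicit Arguments.
Unset Strict Implicit.

Section L.
Variable C : PointedCat.

Lemma zl (A B D : C) (f : Hom A B) : zmor B D ∘ f = zmor A D.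
Proof. unfold zmor. rewrite <- comp_assoc. f_equal. rewrite (to_zero_unique (to_zero B ∘ f)). reflexivity. Qed.

Lemma zr (A B D : C) (g : Hom B D) : g ∘ zmor A B = zmor A D.
Proof. unfold zmor. rewrite comp_assoc. f_equal. rewrite (from_zero_unique (g ∘ from_zero B)). reflexivity. Qed.

Definition Epi {A B : C} (e : Hom A B) := forall X (g h : Hom B X), g ∘ e = h ∘ e -> g = h.

Lemma coker_epi (A B Q : C) (f : Hom A B) (q : Hom B Q) : IsCokernel f q -> Epi q.
Proof.
  intros [H1 H2] X g h E.
  destruct (H2 X (g ∘ q)) as [u [_ Hu]].
  { rewrite <- comp_assoc, H1. apply zr. }
  rewrite (Hu g eq_refl), (Hu h (eq_sym E)). reflexivity.
Qed.

Lemma regepi_epi (B Q : C) (e : Hom B Q) : RegularEpi e -> Epi e.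
Proof.
  intros (A & f & g & H1 & H2) X x y E.
  destruct (H2 X (x ∘ e)) as [u [_ Hu]].
  { rewrite <- !comp_assoc, H1. reflexivity. }
  rewrite (Hu x eq_refl), (Hu y (eq_sym E)). reflexivity.
Qed.

Lemma coker_regepi (A B Q : C) (f : Hom A B) (q : Hom B Q) : IsCokernel f q -> RegularEpi q.
Proof.
  intros [H1 H2]. exists A, f, (zmor A B). split.
  - rewrite H1, zr. reflexivity.
  - intros X h E. apply H2. rewrite E, zr. reflexivity.
Qed.

Lemma ker_mono (A B K : C) (f : Hom A B) (k : Hom K A) : IsKernel f k -> Mono k.
Proof.
  intros [H1 H2] X g h E.
  destruct (H2 X (k ∘ g)) as [u [_ Hu]].
  { rewrite comp_assoc, H1. apply zl. }
  rewrite (Hu g eq_refl), (Hu h (eq_sym E)). reflexivity.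
Qed.

Lemma ker_of_coker (A B K Q : C) (f : Hom A B) (k : Hom K A) (q : Hom A Q) :
  IsKernel f k -> IsCokernel k q -> IsKernel q k.
Proof.
  intros Hk Hq. split. apply Hq.
  intros X h E.
  destruct (proj2 Hq B f (proj1 Hk)) as [f' [Ef _]].
  apply (proj2 Hk). rewrite <- Ef, <- comp_assoc, E. apply zr.
Qed.

Lemma normal_ker (K A Q : C) (k : Hom K A) (q : Hom A Q) :
  NormalMono k -> IsCokernel k q -> IsKernel q k.
Proof. intros (B & f & H) Hq. eapply ker_of_coker; eauto. Qed.

Lemma ortho (A B C' D : C) (e : Hom A B) (m : Hom C' D) (x : Hom A C') (y : Hom B D) :
  RegularEpi e -> Mono m -> m ∘ x = y ∘ e -> exists d, d ∘ e = x /\ m ∘ d = y.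
Proof.
  intros He Hm E. pose proof He as (Z & f & g & H1 & H2).
  destruct (H2 C' x) as [d [Ed _]].
  { apply Hm. rewrite !comp_assoc, E, <- !comp_assoc, H1. reflexivity. }
  exists d. split. exact Ed.
  apply (regepi_epi He). rewrite <- comp_assoc, Ed. exact E.
Qed.

Lemma pb_sym (A B D P : C) (f : Hom A D) (g : Hom B D) (p1 : Hom P A) (p2 : Hom P B) :
  IsPullback f g p1 p2 -> IsPullback g f p2 p1.
Proof.
  intros [H1 H2]. split. auto.
  intros Q q1 q2 E. destruct (H2 Q q2 q1 (eq_sym E)) as (u & E1 & E2 & Hu).
  exists u. split; [|split]; auto.
Qed.

Lemma pb_mono (A B D P : C) (f : Hom A D) (g : Hom B D) (p1 : Hom P A) (p2 : Hom P B) :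
  IsPullback f g p1 p2 -> Mono f -> Mono p2.
Proof.
  intros [H1 H2] Hf X x y E.
  assert (E1 : p1 ∘ x = p1 ∘ y).
  { apply Hf. rewrite !comp_assoc, H1, <- !comp_assoc, E. reflexivity. }
  destruct (H2 X (p1 ∘ x) (p2 ∘ x)) as (u & _ & _ & Hu).
  { rewrite !comp_assoc, H1. reflexivity. }
  rewrite (Hu x eq_refl eq_refl), (Hu y (eq_sym E1) (eq_sym E)). reflexivity.
Qed.

Lemma coker_iso (A B Q1 Q2 : C) (f : Hom A B) (q1 : Hom B Q1) (q2 : Hom B Q2) :
  IsCokernel f q1 -> IsCokernel f q2 -> Isomorphic Q1 Q2.
Proof.
  intros H1 H2.
  destruct (proj2 H1 Q2 q2 (proj1 H2)) as [x [Ex _]].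
  destruct (proj2 H2 Q1 q1 (proj1 H1)) as [y [Ey _]].
  exists x, y. split.
  - apply (coker_epi H1). rewrite <- comp_assoc, Ex, Ey, comp_id_l. reflexivity.
  - apply (coker_epi H2). rewrite <- comp_assoc, Ey, Ex, comp_id_l. reflexivity.
Qed.

Lemma iso_sym (A B : C) : Isomorphic A B -> Isomorphic B A.
Proof. intros (f & g & E1 & E2). exists g, f. auto. Qed.

End L.

Section S.
Variable C : PointedCat.
Hypothesis HN : NormalCat C.

Lemma side (U K W J KV T1 S1 B R : C) (k: Hom K U) (a: Hom W U) (ka: Hom KV K)
  (kw : Hom KV W) (jW : Hom J W) (f : Hom W B) (t1 : Hom T1 U) (s1 : Hom S1 U) (r : Hom W R)
  (Hk : NormalMono k) (HKV : IsPullback k a ka kw) (Hj : IsKernel f jW)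
  (Hkw : exists z, jW ∘ z = kw) (HT1: IsAsymJoin k a t1) (HS1 : IsAsymJoin k (a ∘ jW) s1)
  (Hr : IsCokernel jW r) :
  exists σ1 : Hom S1 T1, t1 ∘ σ1 = s1 /\ NormalMono σ1 /\
    forall Q1 (c1 : Hom T1 Q1), IsCokernel σ1 c1 -> Isomorphic Q1 R.
Proof.
  destruct HN as [[_ [Hpbex [_ Hstab]]] Hnorm].
  destruct HT1 as (Q & I & p & e & m & j' & Hp & He & Hm & Hme & Hpb).
  destruct HS1 as (Q' & I' & p' & e' & m' & j'' & Hp' & He' & Hm' & Hme' & Hpb').
  destruct (proj2 Hp' Q p (proj1 Hp)) as [φ [Eφ _]].
  destruct (proj2 Hp Q' p' (proj1 Hp')) as [ψ [Eψ _]].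
  assert (Eψφ : ψ ∘ φ = idm Q').
  { apply (coker_epi Hp'). rewrite <- comp_assoc, Eφ, Eψ, comp_id_l. reflexivity. }
  destruct (@ortho _ _ _ _ _ e' m (e ∘ jW) (φ ∘ m') He' Hm) as [d [Ed1 Ed2]].
  { rewrite comp_assoc, Hme, <- comp_assoc, <- comp_assoc, Hme', !comp_assoc, Eφ. reflexivity. }
  assert (Hdm : Mono d).
  { intros X x y E. apply Hm'. rewrite <- (comp_id_l (m' ∘ x)), <- (comp_id_l (m' ∘ y)).
    rewrite <- Eψφ, <- !comp_assoc, (comp_assoc φ), (comp_assoc φ), <- Ed2, <- !comp_assoc, E.
    reflexivity. }
  assert (Hkp : IsKernel p k) by (apply normal_ker; auto).
  assert (Hjr : IsKernel r jW) by (eapply ker_of_coker; eauto).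
  destruct Hkw as [z Ez].
  destruct (Hnorm _ _ e He) as (F0 & f0 & Hf0).
  destruct (proj2 Hf0 R r) as [rb [Erb _]].
  { destruct (proj2 Hkp F0 (a ∘ f0)) as [w [Ew _]].
    { rewrite comp_assoc, <- Hme, <- comp_assoc, (proj1 Hf0). apply zr. }
    destruct (proj2 HKV F0 w f0 Ew) as (u0 & _ & Eu0 & _).
    rewrite <- Eu0, <- Ez, !comp_assoc, (proj1 Hr), !zl. reflexivity. }
  destruct (proj2 Hpb S1 (d ∘ j'') s1) as (σ & Eσ1 & Eσ2 & _).
  { rewrite comp_assoc, Ed2, <- comp_assoc, (proj1 Hpb'), comp_assoc, Eφ. reflexivity. }
  exists σ.
  assert (Ht1m : Mono t1) by (eapply pb_mono; eauto).
  assert (Hσm : Mono σ).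
  { intros X x y E. apply (pb_mono Hpb' Hm'). rewrite <- Eσ2, <- !comp_assoc, E. reflexivity. }
  assert (Hrbd : rb ∘ d = zmor I' R).
  { apply (regepi_epi He'). rewrite <- comp_assoc, Ed1, comp_assoc, Erb, (proj1 Hr), zl. reflexivity. }
  assert (Key : forall X (y0 : Hom X I), rb ∘ y0 = zmor X R -> exists y, d ∘ y = y0).
  { intros X y0 Ey0.
    destruct (Hpbex _ _ _ e y0) as (P & π1 & π2 & Hπ).
    pose proof (Hstab _ _ _ _ _ _ _ _ Hπ He) as Hπ2.
    destruct (proj2 Hjr P π1) as [q [Eq _]].
    { rewrite <- Erb, <- comp_assoc, (proj1 Hπ), comp_assoc, Ey0. apply zl. }
    destruct (@ortho _ _ _ _ _ π2 d (e' ∘ q) y0 Hπ2 Hdm) as [y [_ Ey]].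
    { rewrite comp_assoc, Ed1, <- comp_assoc, Eq. apply (proj1 Hπ). }
    exists y. exact Ey. }
  assert (HA : IsKernel (rb ∘ j') σ).
  { split.
    - rewrite <- comp_assoc, Eσ1, comp_assoc, Hrbd. apply zl.
    - intros X h Eh. rewrite <- comp_assoc in Eh.
      destruct (Key X _ Eh) as [y Ey].
      destruct (proj2 Hpb' X y (t1 ∘ h)) as (u & Eu1 & Eu2 & _).
      { rewrite <- Eψ, comp_assoc.
        rewrite <- (comp_assoc ψ p t1), <- (proj1 Hpb).
        rewrite <- !comp_assoc, <- Ey, (comp_assoc m d), Ed2, !comp_assoc, Eψφ, comp_id_l.
        reflexivity. }
      exists u. assert (E : σ ∘ u = h).
      { apply Ht1m. rewrite comp_assoc, Eσ2. exact Eu2. }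
      split. exact E. intros v Ev. apply Hσm. rewrite Ev, E. reflexivity. }
  split. exact Eσ2. split. exists R, (rb ∘ j'). exact HA.
  assert (Hj'reg : RegularEpi j') by (eapply Hstab; [apply pb_sym; exact Hpb | eapply coker_regepi; eauto]).
  assert (Hj''reg : RegularEpi j'') by (eapply Hstab; [apply pb_sym; exact Hpb' | eapply coker_regepi; eauto]).
  assert (HB : IsCokernel σ (rb ∘ j')).
  { split. apply (proj1 HA).
    intros X h Eh.
    destruct (Hnorm _ _ j' Hj'reg) as (F1 & f1 & Hf1).
    destruct (proj2 HA F1 f1) as [u1 [Eu1 _]].
    { rewrite <- comp_assoc, (proj1 Hf1). apply zr. }
    destruct (proj2 Hf1 X h) as [h' [Eh' _]].
    { rewrite <- Eu1, comp_assoc, Eh. apply zl. }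
    assert (Eh'd : h' ∘ d = zmor I' X).
    { apply (regepi_epi Hj''reg). rewrite <- comp_assoc, <- Eσ1, comp_assoc, Eh', Eh, zl. reflexivity. }
    destruct (proj2 Hr X (h' ∘ e)) as [h'' [Eh'' _]].
    { rewrite <- comp_assoc, <- Ed1, comp_assoc, Eh'd. apply zl. }
    assert (Eh''rb : h'' ∘ rb = h').
    { apply (regepi_epi He). rewrite <- comp_assoc, Erb. exact Eh''. }
    exists h''. split.
    - rewrite comp_assoc, Eh''rb. exact Eh'.
    - intros v Ev.
      assert (E1 : v ∘ rb = h'' ∘ rb).
      { apply (regepi_epi Hj'reg). rewrite <- !comp_assoc, Ev, comp_assoc, Eh''rb; exact (eq_sym Eh'). }
      apply (coker_epi Hr). rewrite <- Erb, !comp_assoc, E1. reflexivity. }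
  intros Q1 c1 Hc1. eapply coker_iso; eauto.
Qed.
End S.

Theorem corollary3p4 (C : PointedCat)
  (HN : NormalCat C) (HP : HasPushoutsOfRegEpis C)
  (A U V K L : C) (k : Hom K U) (l : Hom L V) (u : Hom U A) (v : Hom V A)
  (Hk : NormalMono k) (Hl : NormalMono l) (Hu : Mono u) (Hv : Mono v)
  (* W = U ∩ V, with projections a : W -> U, b : W -> V *)
  (W : C) (a : Hom W U) (b : Hom W V) (HW : IsPullback u v a b)
  (* KV = K ∩ V := K ∩ (U ∩ V), a kernel on W via kw *)
  (KV : C) (ka : Hom KV K) (kw : Hom KV W) (HKV : IsPullback k a ka kw)
  (* LU = L ∩ U := L ∩ (U ∩ V), a kernel on W via lw *)
  (LU : C) (lb : Hom LU L) (lw : Hom LU W) (HLU : IsPullback l b lb lw)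
  (* J = (K ∩ V) ∨_{U ∩ V} (L ∩ U) *)
  (J : C) (jW : Hom J W) (HJ : IsKernelJoin kw lw jW)
  (* T1 = K ⊻_U (U ∩ V),  S1 = K ⊻_U J *)
  (T1 S1 : C) (t1 : Hom T1 U) (s1 : Hom S1 U)
  (HT1 : IsAsymJoin k a t1) (HS1 : IsAsymJoin k (a ∘ jW) s1)
  (* T2 = L ⊻_V (U ∩ V),  S2 = L ⊻_V J *)
  (T2 S2 : C) (t2 : Hom T2 V) (s2 : Hom S2 V)
  (HT2 : IsAsymJoin l b t2) (HS2 : IsAsymJoin l (b ∘ jW) s2)
  (* (U ∩ V) / J *)
  (R : C) (r : Hom W R) (Hr : IsCokernel jW r) :
  (exists σ1 : Hom S1 T1, t1 ∘ σ1 = s1 /\ NormalMono σ1 /\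
     forall (Q1 : C) (c1 : Hom T1 Q1), IsCokernel σ1 c1 -> Isomorphic Q1 R) /\
  (exists σ2 : Hom S2 T2, t2 ∘ σ2 = s2 /\ NormalMono σ2 /\
     forall (Q2 : C) (c2 : Hom T2 Q2), IsCokernel σ2 c2 -> Isomorphic R Q2).
Proof.
  pose proof HJ as (Q1 & Q2 & P & p1 & p2 & i1 & i2 & Hp1 & Hp2 & Hpo & Hker).
  split.
  - eapply side; eauto.
    destruct (proj2 Hker KV kw) as [z [Ez _]].
    { rewrite <- comp_assoc, (proj1 Hp1). apply zr. }
    exists z; exact Ez.
  - assert (Hz : exists z, jW ∘ z = lw).
    { destruct (proj2 Hker LU lw) as [z [Ez _]].
      { rewrite (proj1 Hpo), <- comp_assoc, (proj1 Hp2). apply zr. }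
      exists z; exact Ez. }
    destruct (side HN Hl HLU Hker Hz HT2 HS2 Hr) as (σ & E1 & E2 & E3).
    exists σ. split; auto. split; auto. intros. apply iso_sym. eapply E3; eauto.
Qed.
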